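(* Let $R$ be a commutative associative ring with unit element, let $b\in R$, and let $m\ge 1$. Let $T_{b+1,b}$ be the symmetric $2m\times 2m$ matrix over $R$ whose diagonal entries are $0$, whose entries in positions $(i,i+1)$ and $(i+1,i)$ ($1\le i\le 2m-1$) equal $b+1$, and all of whose other entries equal $b$. Then $\mathrm{Hf}(T_{b+1,b})=y_m(b)$, where $y_m(x)=\sum_{k=0}^m \frac{(m+k)!}{k!\,(m-k)!}\left(\frac{x}{2}\right)^k=\sum_{k=0}^m \frac{(m+k)!}{k!\,(m-k)!\,2^k}x^k$ is the Bessel polynomial of degree $m$ (its coefficients are integers, so it can be evaluated in $R$).
   Context: For a symmetric matrix $A=(a_{ij})$ of order $n=2m$ over a commutative ring, the hafnian is $\mathrm{Hf}(A)=\sum a_{i_1i_2}a_{i_3i_4}\cdots a_{i_{n-1}i_n}$, where the sum runs over all partitions of $\{1,\dots,n\}$ into $m$ disjoint unordered pairs $\{i_1,i_2\},\dots,\{i_{n-1},i_n\}$ (each partition counted once). Diagonal entries do not enter the definition. *)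

(* Defs.v *)
From HB Require Import structures.
From mathcomp Require Import all_boot all_order all_algebra all_fingroup.
Set Implicit Arguments. Unset Strict Implicit. Unset Printing Implicit Defensive.
Import GRing.Theory.
Local Open Scope ring_scope.

(* Perfect matchings of {0,..,n-1} (partitions into unordered pairs) are
   encoded bijectively as fixed-point-free involutions s : a pair {i, s i}.
   Each pair is counted once via its smaller element i < s i. *)
Definition fpf_involution (n : nat) (s : 'S_n) : bool :=
  [forall i, (s (s i) == i) && (s i != i)].

Definition hafnian (R : comPzRingType) (n : nat) (A : 'M[R]_n) : R :=
  \sum_(s : 'S_n | fpf_involution s) \prod_(i : 'I_n | (i < s i)%N) A i (s i).

Definition Tmat (R : comPzRingType) (m : nat) (b : R) : 'M[R]_(m.*2) :=
  \matrix_(i, j) (if i == j then 0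
                  else if ((i.+1 == j) || (j.+1 == i))%N then b + 1 else b).

(* integer coefficient (m+k)! / (k! (m-k)! 2^k) of the Bessel polynomial;
   the division is exact *)
Definition bessel_coef (m k : nat) : nat :=
  ((m + k)`! %/ (k`! * (m - k)`! * 2 ^ k))%N.

Definition bessel (R : comPzRingType) (m : nat) (x : R) : R :=
  \sum_(0 <= k < m.+1) (bessel_coef m k)%:R * x ^+ k.

(* Main.v *)
Require Import Defs.
From HB Require Import structures.
From mathcomp Require Import all_boot all_order all_algebra all_fingroup zify ring.
Set Implicit Arguments. Unset Strict Implicit. Unset Printing Implicit Defensive.
Import GRing.Theory.
Local Open Scope ring_scope.

Section Hafl.
Variable R : comPzRingType.
Variable T : eqType.

Fixpoint hafl_rec (w : T -> T -> R) (n : nat) (s : seq T) : R :=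
  match s with
  | [::] => 1
  | x :: s' => match n with
               | 0 => 0
               | n'.+1 => \sum_(y <- s') w x y * hafl_rec w n' (rem y s')
               end
  end.

Definition hafl w s := hafl_rec w (size s) s.

Lemma hafl_rec_fuel w n s : (size s <= n)%N -> hafl_rec w n s = hafl w s.
Proof.
rewrite /hafl.
have H : forall n1 n2 s, (size s <= n1)%N -> (size s <= n2)%N ->
   hafl_rec w n1 s = hafl_rec w n2 s.
  elim=> [|n1 IH] n2 [|x s'] //= h1 h2; case: n2 h2 => // n2 h2.
  apply: eq_big_seq => y ys; congr (_ * _); apply: IH.
    by rewrite size_rem // -ltnS (leq_trans _ h1) // ltnS leq_pred.
  by rewrite size_rem // -ltnS (leq_trans _ h2) // ltnS leq_pred.
by move=> hs; apply: H.
Qed.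

Lemma hafl_nil w : hafl w [::] = 1. Proof. by []. Qed.

Lemma hafl_cons w x s :
  hafl w (x :: s) = \sum_(y <- s) w x y * hafl w (rem y s).
Proof.
rewrite {1}/hafl /=; apply: eq_big_seq => y ys; congr (_ * _).
by apply: hafl_rec_fuel; rewrite size_rem // leq_pred.
Qed.

Lemma hafl_ext w w' s : uniq s ->
  (forall x y, x \in s -> y \in s -> x != y -> w x y = w' x y) ->
  hafl w s = hafl w' s.
Proof.
move: {2}(size s) (leqnn (size s)) => n; elim: n s => [|n IH] [|x s] //= hn /andP[xs us] H.
rewrite !hafl_cons; apply: eq_big_seq => y ys; congr (_ * _).
  apply: H; rewrite ?inE ?ys ?eqxx ?orbT //; apply/eqP=> e; subst; by rewrite ys in xs.
apply: IH.
- rewrite size_rem //; lia.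
- by rewrite rem_uniq.
move=> a c ha hc; apply: H; rewrite inE; apply/orP; right.
  exact: (mem_rem ha).
exact: (mem_rem hc).
Qed.

End Hafl.

Lemma map_rem_inj (T U : eqType) (f : T -> U) (x : T) s : injective f ->
  map f (rem x s) = rem (f x) (map f s).
Proof.
move=> fi; elim: s => //= y s IH; rewrite (inj_eq fi); case: eqP => //= _; by rewrite IH.
Qed.

Lemma hafl_map (R : comPzRingType) (T U : eqType) (f : T -> U) (w : U -> U -> R) s : injective f ->
  hafl w (map f s) = hafl (fun i j => w (f i) (f j)) s.
Proof.
move=> fi; move: {2}(size s) (leqnn (size s)) => n; elim: n s => [|n IH] [|x s] //= hn.
rewrite !hafl_cons big_map; apply: eq_big_seq => y ys; congr (_ * _).
rewrite -map_rem_inj // IH // size_rem //; lia.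
Qed.
Section HV.
Variable R : comPzRingType. Variable n : nat.
Implicit Types (A : 'M[R]_n) (V : {set 'I_n}) (s u : 'S_n).

Definition PV V s := [forall i : 'I_n, if i \in V then (s (s i) == i) && (s i != i) else s i == i].
Definition HV A V := \sum_(s | PV V s) \prod_(i : 'I_n | (i < s i)%N) A i (s i).

Lemma HV0 A : HV A set0 = 1.
Proof.
rewrite /HV (big_pred1 1%g).
  by rewrite big_pred0 // => i; rewrite perm1 ltnn.
move=> s; apply/forallP/eqP => [H|->]; last by move=> i; rewrite inE perm1.
by apply/permP => i; move: (H i); rewrite inE perm1 => /eqP.
Qed.

Lemma PV_fix V s i : PV V s -> i \notin V -> s i = i.
Proof. by move=> /forallP /(_ i) H iV; move: H; rewrite (negPf iV) => /eqP. Qed.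

Lemma PV_in V s i : PV V s -> i \in V -> s (s i) = i /\ s i != i.
Proof. by move=> /forallP /(_ i) H iV; move: H; rewrite iV => /andP[/eqP]. Qed.

Lemma PV_step V x y u : x \in V -> y \in V -> x != y ->
  (PV V (u * tperm x y)%g && ((u * tperm x y)%g x == y)) = PV (V :\ x :\ y) u.
Proof.
move=> xV yV xy; apply/idP/idP.
  move=> /andP[H /eqP sx]; set s := (u * tperm x y)%g in H sx.
  have us : u = (s * tperm x y)%g by rewrite /s -mulgA tperm2 mulg1.
  clearbody s.
  have [sy _] := PV_in H xV; rewrite sx in sy.
  apply/forallP => i; rewrite us !permM !inE.
  case: (i =P x) => [->|ix] /=; first by rewrite andbF sx tpermR.
  case: (i =P y) => [->|iy] /=; first by rewrite sy tpermL.
  case: (boolP (i \in V)) => iV /=; last first.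
    by rewrite (PV_fix H iV) tpermD //; apply/eqP => e; [apply: ix|apply: iy].
  have [ssi si] := PV_in H iV.
  have six : s i != x by apply/eqP => e; apply: iy; rewrite -ssi e.
  have siy : s i != y by apply/eqP => e; apply: ix; rewrite -ssi e.
  have ? : x != s i by rewrite eq_sym.
  have ? : y != s i by rewrite eq_sym.
  have ? : x != i by apply/eqP => e; apply: ix.
  have ? : y != i by apply/eqP => e; apply: iy.
  have e1 : tperm x y (s i) = s i by rewrite tpermD.
  by rewrite tpermD e1 ?ssi ?eqxx // e1 ssi.
move=> H.
have ux : u x = x by apply: (PV_fix H); rewrite !inE eqxx andbF.
have uy : u y = y by apply: (PV_fix H); rewrite !inE eqxx.
apply/andP; split; last by rewrite permM ux tpermL.
apply/forallP => i; rewrite !permM.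
have tD j : j != x -> j != y -> tperm x y j = j.
  by move=> jx jy; rewrite tpermD // eq_sym.
case: (boolP (i \in V)) => iV.
  case: (i =P x) => [->|/eqP ix]; first by rewrite ux tpermL uy tpermR eqxx eq_sym.
  case: (i =P y) => [->|/eqP iy]; first by rewrite uy tpermR ux tpermL eqxx.
  have iW : i \in V :\ x :\ y by rewrite !inE iV ix iy.
  have [uui ui] := PV_in H iW.
  have uix : u i != x.
    apply/eqP => e; have e2 : u i = u x by rewrite e ux.
    move/perm_inj: e2 => e2.
    by rewrite e2 eqxx in ix.
  have uiy : u i != y.
    apply/eqP => e; have e2 : u i = u y by rewrite e uy.
    move/perm_inj: e2 => e2.
    by rewrite e2 eqxx in iy.
  by rewrite (tD _ uix uiy) uui tD // eqxx ui.
have iW : i \notin V :\ x :\ y by rewrite !inE (negPf iV) !andbF.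
have ix : i != x by apply/eqP => e; rewrite e xV in iV.
have iy : i != y by apply/eqP => e; rewrite e yV in iV.
by rewrite (PV_fix H iW) tD.
Qed.

Lemma prod_step A V x y u : (forall i j, A i j = A j i) -> x \in V -> y \in V -> x != y ->
  PV (V :\ x :\ y) u ->
  \prod_(i : 'I_n | (i < (u * tperm x y)%g i)%N) A i ((u * tperm x y)%g i)
  = A x y * \prod_(i : 'I_n | (i < u i)%N) A i (u i).
Proof.
move=> As xV yV xy H.
have ux : u x = x by apply: (PV_fix H); rewrite !inE eqxx andbF.
have uy : u y = y by apply: (PV_fix H); rewrite !inE eqxx.
rewrite (bigID (fun i => (i == x) || (i == y))) /=; congr (_ * _).
  case: (ltngtP x y) => [lxy|lyx|exy].
  - rewrite (big_pred1 x) ?permM ?ux ?tpermL // => i; rewrite /= permM.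
    case: (i =P x) => [->|ix]; first by rewrite ux tpermL lxy.
    case: (i =P y) => [->|iy]; first by rewrite uy tpermR ltnNge (ltnW lxy) andbT.
    by rewrite andbF.
  - rewrite (big_pred1 y); first by rewrite permM uy tpermR As.
    move=> i; rewrite /= permM.
    case: (i =P x) => [->|ix]; first by rewrite ux tpermL ltnNge (ltnW lyx) (negPf xy).
    case: (i =P y) => [->|iy]; first by rewrite uy tpermR lyx.
    by rewrite andbF.
  - by move/val_inj: exy => e; move: xy; rewrite e eqxx.
apply: eq_big => i.
  case: (i =P x) => [->|ix]; first by rewrite ux ltnn andbF.
  case: (i =P y) => [->|iy]; first by rewrite uy ltnn andbF.
  rewrite /= andbT permM tpermD //.
    apply/eqP => e; apply: ix; apply: (@perm_inj _ u); by rewrite ux.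
  apply/eqP => e; apply: iy; apply: (@perm_inj _ u); by rewrite uy.
move=> /andP[_ hi]; rewrite permM tpermD //.
  apply/eqP => e; have : u i = u x by rewrite -e ux.
  by move/perm_inj => e2; rewrite e2 eqxx in hi.
apply/eqP => e; have : u i = u y by rewrite -e uy.
by move/perm_inj => e2; rewrite e2 eqxx orbT in hi.
Qed.


Lemma HVrec A V x : (forall i j, A i j = A j i) -> x \in V ->
  HV A V = \sum_(y in V :\ x) A x y * HV A (V :\ x :\ y).
Proof.
move=> As xV; rewrite /HV (partition_big (fun s : 'S_n => s x) (mem (V :\ x))).
  apply: eq_bigr => y; rewrite !inE => /andP[yx yV]; have xy : x != y by rewrite eq_sym.
  rewrite big_distrr /= (reindex_inj (mulIg (tperm x y))) /=.
  apply: eq_big => u; first by apply: PV_step.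
  by rewrite PV_step // => H; exact: (prod_step As xV yV xy H).
move=> s H; have [ssx sx] := PV_in H xV; rewrite !inE sx /=.
apply/negPn/negP => sV; move: (PV_fix H sV); rewrite ssx => e.
by rewrite -e eqxx in sx.
Qed.
End HV.

Lemma hafl_HV (R : comPzRingType) n (A : 'M[R]_n) s :
  (forall i j, A i j = A j i) -> uniq s ->
  hafl (fun i j => A i j) s = HV A [set:: s].
Proof.
move=> As; move: {2}(size s) (leqnn (size s)) => k; elim: k s => [|k IH] [|x s] //= hs.
- by move=> _; rewrite set_nil HV0.
- by move=> _; rewrite set_nil HV0.
move=> /andP[xs us].
rewrite hafl_cons (HVrec As (_ : x \in _)); last by rewrite set_cons !inE eqxx.
rewrite set_cons setU1K; last by rewrite inE.
rewrite (big_uniq _ us); apply: eq_big => [y|y ys]; first by rewrite inE.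
have -> : [set:: s] :\ y = [set:: rem y s].
  by apply/setP => z; rewrite !inE (mem_rem_uniq _ us) inE.
rewrite IH ?rem_uniq // size_rem //; move: hs; case: (size s) => //= j; rewrite ltnS => /ltnW; exact.
Qed.

Lemma hafl_perm (R : comPzRingType) (w : nat -> nat -> R) s1 s2 :
  (forall i j, w i j = w j i) -> uniq s1 -> perm_eq s1 s2 -> hafl w s1 = hafl w s2.
Proof.
move=> ws u1 p12; have u2 : uniq s2 by rewrite -(perm_uniq p12).
set M := (\max_(x <- s1) x)%N.
have bnd : forall x, x \in s1 -> (x <= M)%N.
  move=> x xs; rewrite /M; exact: (@leq_bigmax_seq nat s1 xpredT (fun z => z) x xs).
pose f := fun x : nat => (inord x : 'I_M.+1).
have Ef : forall s, {subset s <= s1} -> s = map val (map f s).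
  move=> s ss; rewrite -map_comp -{1}(map_id s); apply/eq_in_map => x xs /=.
  by rewrite inordK // ltnS bnd // ss.
pose A := \matrix_(i, j) w (val i) (val j) : 'M[R]_M.+1.
have As : forall i j, A i j = A j i by move=> i j; rewrite !mxE ws.
have fi : {in s1 &, injective f}.
  by move=> x y xs ys e; rewrite -(inordK (_ : x < M.+1)%N) ?ltnS ?bnd // -/(f x) e inordK // ltnS bnd.
have key : forall s, {subset s <= s1} -> uniq s -> hafl w s = HV A [set:: map f s].
  move=> s ss us; rewrite {1}(Ef s ss) hafl_map; last exact: val_inj.
  rewrite -hafl_HV //; last first.
    rewrite map_inj_in_uniq // => x y xs ys; apply: fi; exact: ss.
  by apply: hafl_ext => [|i j _ _ _]; rewrite ?mxE // map_inj_in_uniq // => x y xs ys; apply: fi; exact: ss.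
rewrite (key s1) // (key s2) //; last by move=> x; rewrite (perm_mem p12).
congr HV; apply/setP => z; rewrite !inE.
apply: perm_mem; exact: perm_map.
Qed.

Definition adj (i j : nat) : bool := (i.+1 == j) || (j.+1 == i).
Definition tk (R : comPzRingType) (b : R) (k i j : nat) : R :=
  b + (if adj i j && (maxn i j < k)%N then 1 else 0).
Fixpoint df (q : nat) : nat := if q is q'.+1 then (q'.*2.+1 * df q')%N else 1%N.

Lemma tk_sym (R : comPzRingType) (b : R) k i j : tk b k i j = tk b k j i.
Proof. by rewrite /tk /adj orbC maxnC. Qed.

Lemma sum_const_seq (R : comPzRingType) (T : eqType) (s : seq T) (c : R) :
  \sum_(y <- s) c = c *+ size s.
Proof. by elim: s => [|y s IH]; rewrite ?big_nil ?big_cons ?IH ?mulrS. Qed.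

Lemma hafl_const (R : comPzRingType) (T : eqType) (b : R) (w : T -> T -> R) s k :
  uniq s -> size s = k.*2 ->
  (forall x y, x \in s -> y \in s -> x != y -> w x y = b) ->
  hafl w s = b ^+ k * (df k)%:R.
Proof.
move=> us hs H; rewrite (hafl_ext (w' := fun _ _ => b) us H).
elim: k s us hs {H} => [|k IH] [|x s] //=; first by rewrite mulr1.
move=> /andP[xs us] [hs]; rewrite hafl_cons.
rewrite (eq_big_seq (fun _ => b * (b ^+ k * (df k)%:R))); last first.
  move=> y ys; rewrite IH ?rem_uniq // size_rem // hs //.
rewrite sum_const_seq hs natrM exprS; ring.
Qed.

Section B.
Variable R : comPzRingType.
Variable b : R.

Lemma tk_step k' y : tk b k'.+2 k' y = tk b k'.+1 k' y + (y == k'.+1)%:R.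
Proof.
rewrite /tk /adj; case: (y =P k'.+1) => [->|hy].
  have -> : maxn k' k'.+1 = k'.+1 by lia.
  by rewrite eqxx /= ltnSn ltnn addr0.
rewrite addr0; congr (_ + _); congr (if _ then _ else _).
move/eqP: hy => hy; lia.
Qed.

Lemma tk_off k' i j : i != k' -> j != k' -> tk b k'.+2 i j = tk b k'.+1 i j.
Proof.
rewrite /tk /adj => hi hj; congr (_ + _); congr (if _ then _ else _); lia.
Qed.

Definition gsh (k' i : nat) : nat := if (i < k')%N then i else i.+2.

Lemma gsh_inj k' : injective (gsh k').
Proof. by move=> i j; rewrite /gsh; case: ifP; case: ifP => *; lia. Qed.

Lemma tk_shift k' i j : tk b k'.+1 (gsh k' i) (gsh k' j) = tk b k' i j.
Proof.
rewrite /tk /adj /gsh; congr (_ + _); congr (if _ then _ else _).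
by case: ifP; case: ifP => *; lia.
Qed.

Lemma map_gsh k' n : (k'.+2 <= n)%N ->
  map (gsh k') (iota 0 n.-2) = iota 0 k' ++ iota k'.+2 (n - k'.+2).
Proof.
move=> hn.
have -> : n.-2 = (k' + (n - k'.+2))%N by lia.
rewrite iotaD map_cat add0n; congr (_ ++ _).
  by apply: map_id_in => i; rewrite mem_iota /gsh => /andP[_ ->].
have -> : k'.+2 = (2 + k')%N by [].
rewrite iotaDl; apply/eq_in_map => i; rewrite mem_iota /gsh => /andP[h _].
by rewrite ltnNge h.
Qed.

Lemma a_rec n k' : (k'.+2 <= n)%N ->
  hafl (tk b k'.+2) (iota 0 n) =
  hafl (tk b k'.+1) (iota 0 n) + hafl (tk b k') (iota 0 n.-2).
Proof.
move=> hn.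
have uL : uniq (iota 0 n) := iota_uniq 0 n.
have uin : k' \in iota 0 n by rewrite mem_iota; lia.
rewrite (hafl_perm (@tk_sym _ b _) uL (perm_to_rem uin)) hafl_cons.
rewrite (hafl_perm (@tk_sym _ b _) uL (perm_to_rem uin)) hafl_cons.
set L' := rem k' (iota 0 n).
have uL' : uniq L' by rewrite rem_uniq.
have kL' : k' \notin L' by rewrite mem_rem_uniqF.
have vin : k'.+1 \in L' by rewrite mem_rem_uniq // inE mem_iota; lia.
rewrite (eq_big_seq (fun y => tk b k'.+1 k' y * hafl (tk b k'.+1) (rem y L')
     + (y == k'.+1)%:R * hafl (tk b k'.+1) (rem y L'))); last first.
  move=> y yL; rewrite tk_step mulrDl.
  have -> : hafl (tk b k'.+2) (rem y L') = hafl (tk b k'.+1) (rem y L') => //.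
  apply: hafl_ext; rewrite ?rem_uniq // => i j hi hj _; apply: tk_off.
    by apply/eqP => e; subst; rewrite (mem_rem hi) in kL'.
  by apply/eqP => e; subst; rewrite (mem_rem hj) in kL'.
rewrite big_split /=; congr (_ + _).
rewrite (big_rem _ vin) /= eqxx mul1r big1_seq ?addr0; last first.
  move=> i /andP[_ hi]; have -> : (i == k'.+1) = false.
    by apply/negP => /eqP e; subst; rewrite mem_rem_uniqF in hi.
  by rewrite mul0r.
have pe : perm_eq (rem k'.+1 L') (map (gsh k') (iota 0 n.-2)).
  apply: uniq_perm; first by rewrite rem_uniq.
    by rewrite (map_inj_uniq (@gsh_inj k')) iota_uniq.
  move=> z; rewrite map_gsh // mem_cat !mem_iota (mem_rem_uniq _ uL') inE /L'
    (mem_rem_uniq _ uL) inE mem_iota.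
  apply/idP/idP; lia.
rewrite (hafl_perm (@tk_sym _ b _) _ pe) ?rem_uniq // hafl_map; last exact: gsh_inj.
by apply: hafl_ext; rewrite ?iota_uniq // => i j _ _ _; rewrite tk_shift.
Qed.

Definition Fc (p k : nat) : R :=
  \sum_(j < p.+1) ('C(k - j, j))%:R * (b ^+ (p - j) * (df (p - j))%:R).

Lemma binom_step a j : 'C(a.+1 - j, j.+1) = ('C(a - j, j.+1) + 'C(a - j, j))%N.
Proof.
case: (leqP j a) => h; first by rewrite subSn // binS.
have -> : (a.+1 - j = 0)%N by lia.
have -> : (a - j = 0)%N by lia.
by rewrite !bin0n; case: j h.
Qed.

Lemma a_base p k : (k <= 1)%N -> hafl (tk b k) (iota 0 p.*2) = Fc p k.
Proof.
move=> hk; rewrite (@hafl_const _ _ b _ _ p) ?iota_uniq ?size_iota //; last first.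
  move=> x y _ _ xy; rewrite /tk /adj.
  have -> : (((x.+1 == y) || (y.+1 == x)) && (maxn x y < k)%N) = false.
    move/eqP: xy => xy; apply/negP => /andP[h1 h2]; move: h1 h2; lia.
  by rewrite addr0.
rewrite /Fc big_ord_recl /= subn0 bin0 mul1r big1 ?addr0 ?subn0 // => i _.
have -> : (k - (bump 0 i) = 0)%N by rewrite /bump; lia.
by rewrite bin0n /= mul0r.
Qed.

Lemma a_closed k p : (k <= p.*2)%N -> hafl (tk b k) (iota 0 p.*2) = Fc p k.
Proof.
have : (forall p, k <= p.*2 -> hafl (tk b k) (iota 0 p.*2) = Fc p k)%N /\
       (forall p, k.+1 <= p.*2 -> hafl (tk b k.+1) (iota 0 p.*2) = Fc p k.+1)%N.
  elim: k {p} => [|k [IH1 IH2]]; first by split=> p _; apply: a_base.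
  split => // p hp.
  case: p hp => [|p'] hp; first by [].
  rewrite a_rec; last by lia.
  rewrite IH2; last by lia.
  have -> : (p'.+1.*2.-2 = p'.*2)%N by lia.
  rewrite IH1; last by lia.
  rewrite /Fc [X in X + _ = _]big_ord_recl [RHS]big_ord_recl /= !subn0 !bin0 -addrA; congr (_ + _).
  rewrite -big_split /=; apply: eq_bigr => i _.
  rewrite /bump /= !add1n !subSS binom_step natrD mulrDl; congr (_ + _).
by case=> H _; apply: H.
Qed.
End B.

Lemma df_fact q : ((q.*2)`! = df q * q`! * 2 ^ q)%N.
Proof.
elim: q => [|q IH] //.
rewrite doubleS !factS IH /= expnS -!mul2n.
rewrite !mulnA; ring.
Qed.

Lemma coef_eq m q : (q <= m)%N -> bessel_coef m q = ('C(m + q, m - q) * df q)%N.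
Proof.
move=> hq; rewrite /bessel_coef.
have hb : (m - q <= m + q)%N by lia.
have e : (m + q - (m - q) = q.*2)%N by lia.
have := bin_fact hb; rewrite e df_fact => <-.
have -> : ('C(m + q, m - q) * ((m - q)`! * (df q * q`! * 2 ^ q)) =
   ('C(m + q, m - q) * df q) * (q`! * (m - q)`! * 2 ^ q))%N by ring.
by rewrite mulnK // !muln_gt0 !fact_gt0 expn_gt0.
Qed.

Unset Implicit Arguments.
Set Strict Implicit.

Theorem mainTheorem4 (R : comPzRingType) (b : R) (m : nat) (hm : (1 <= m)%N) :
  hafnian (Tmat m b) = bessel m b.
Proof.
have -> : hafnian (Tmat m b) = HV (Tmat m b) [set:: enum 'I_m.*2].
  rewrite /hafnian /HV; apply: eq_bigl => s; apply: eq_forallb => i.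
  by rewrite inE mem_enum.
have As : forall i j, Tmat m b i j = Tmat m b j i.
  by move=> i j; rewrite !mxE eq_sym orbC.
rewrite -hafl_HV ?enum_uniq //.
rewrite (hafl_ext (w' := fun i j => tk b m.*2 (val i) (val j))) ?enum_uniq //; last first.
  move=> i j _ _ ij; rewrite mxE (negPf ij) /tk /adj gtn_max !ltn_ord andbT.
  by case: ifP; rewrite ?addr0.
rewrite -hafl_map; last exact: val_inj.
rewrite val_enum_ord a_closed // /Fc /bessel big_mkord.
rewrite (reindex_inj rev_ord_inj) /=; apply: eq_bigr => j _.
have hj : (j <= m)%N by rewrite -ltnS.
rewrite subSS coef_eq ?leq_subr // natrM.
have -> : (m.*2 - (m - j) = m + j)%N by lia.
have -> : (m - (m - j) = j)%N by lia.
by rewrite -mulrA [b ^+ j * _]mulrC.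
Qed.
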